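(* Let $c,C>0$ be arbitrary and define, for functions $g$ on $(0,\infty)$, the linear operator \[ L(g)(r):=c\int_{r}^\infty\frac{g(s)}{s}\, ds-C\Big(g(r)+\frac{1}{r}\int_0^r g(s)\, ds+r\int_r^\infty \frac{g(s)}{s^2}\, ds\Big). \] Then there exists a function $W_2$ that is positive and integrable on $[0,\infty)$ such that $W_1:=L^*(W_2)>0$ on $(0,\infty)$, where $L^*$ denotes the adjoint of $L$ with respect to the $L^2([0,\infty),dr)$ pairing.
   Context: Explicitly, the adjoint is $L^*(h)(r)=\frac{c}{r}\int_0^r h(s)\,ds-C\Big(h(r)+\int_r^\infty\frac{h(s)}{s}\,ds+\frac{1}{r^2}\int_0^r s\,h(s)\,ds\Big)$, characterized by $\int_0^\infty L(g)\,h\,dr=\int_0^\infty g\,L^*(h)\,dr$. *)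

(* Defs.v *)
From HB Require Import structures.
From mathcomp Require Import all_boot all_order all_algebra.
From mathcomp Require Import all_classical all_reals all_analysis.
Set Implicit Arguments. Unset Strict Implicit. Unset Printing Implicit Defensive.
Import Order.TTheory GRing.Theory Num.Theory.
Local Open Scope classical_set_scope.
Local Open Scope ring_scope.

Definition Rint (R : realType) (D : set R) (f : R -> R) : R :=
  Rintegral (@lebesgue_measure R) D f.

Definition Lop (R : realType) (c C : R) (g : R -> R) (r : R) : R :=
  c * Rint `[r, +oo[ (fun s => g s / s)
  - C * (g r + r^-1 * Rint `[0, r] g + r * Rint `[r, +oo[ (fun s => g s / s ^+ 2)).

(* Its L^2([0,oo),dr)-adjoint, given explicitly in the paper:
   L^*(h)(r) = c/r int_0^r h - C (h(r) + int_r^oo h(s)/s ds + 1/r^2 int_0^r s h(s) ds). *)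
Definition Lstar (R : realType) (c C : R) (h : R -> R) (r : R) : R :=
  c / r * Rint `[0, r] h
  - C * (h r + Rint `[r, +oo[ (fun s => h s / s)
           + r ^- 2 * Rint `[0, r] (fun s => s * h s)).

(* Main.v *)
Require Import Defs.
From HB Require Import structures.
From mathcomp Require Import all_boot all_order all_algebra.
From mathcomp Require Import all_classical all_reals all_analysis.
From mathcomp Require Import measurable_realfun.
From mathcomp Require Import ring lra.
Import Order.TTheory GRing.Theory Num.Theory.
Local Open Scope classical_set_scope.
Local Open Scope ring_scope.
Import numFieldNormedType.Exports.
Section S.
Context {R : realType}.
Notation mu := (@lebesgue_measure R).

Lemma powR_cvgy0 (p : R) : 0 < p -> x `^ (-p) @[x --> +oo] --> 0.
Proof.
move=> p0; apply/cvgr0Pnorm_lt => e e0.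
pose M := (e^-1) `^ (p^-1).
have M0 : 0 <= M by exact: powR_ge0.
near=> x.
have xM : M < x by near: x; apply: nbhs_pinfty_gt; rewrite realE M0.
have x0 : 0 < x by exact: le_lt_trans xM.
rewrite ger0_norm ?powR_ge0// powRN.
rewrite invf_plt ?posrE ?powR_gt0//.
have -> : e^-1 = M `^ p.
  by rewrite /M -powRrM mulVf ?gt_eqF// powRr1// invr_ge0 ltW.
by apply: gt0_ltr_powR => //; rewrite nnegrE ltW.
Unshelve. all: by end_near. Qed.

Lemma powR_cont (q x : R) : 0 < x -> {for x, continuous (fun y : R => y `^ q)}.
Proof.
move=> x0; apply: differentiable_continuous; apply/derivable1_diffP.
by apply: derivable_powR; rewrite in_itv/= andbT.
Qed.

Lemma dF_tail (p x : R) : 0 < p -> 0 < x ->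
  is_derive x 1 (fun y => (- p^-1) * y `^ (-p)) (x `^ (-p-1)).
Proof.
move=> p0 x0.
have H := is_deriveZ (- p^-1) (is_derive1_powR (-p) x0).
have -> : x `^ (-p-1) = (- p^-1) *: (-p * x `^ (-p - 1)).
  by rewrite scalerA mulrNN mulVf ?gt_eqF// scale1r.
exact: H.
Qed.

Lemma int_tail (a p : R) : 0 < a -> 0 < p ->
  (\int[mu]_(x in `[a, +oo[) (x `^ (-p-1))%:E = (a `^ (-p) / p)%:E)%E.
Proof.
move=> a0 p0.
pose F := fun y : R => (- p^-1) * y `^ (-p).
have dF x : a < x -> is_derive x 1 F (x `^ (-p-1)).
  by move=> ax; apply: dF_tail => //; exact: lt_trans ax.
rewrite (@ge0_continuous_FTC2y _ _ F a 0).
- by rewrite /F -EFinB sub0r mulNr opprK mulrC.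
- by move=> x _; exact: powR_ge0.
- apply: continuous_subspace_itv => x; rewrite in_itv/= andbT => ax.
  by apply: powR_cont; exact: lt_le_trans ax.
- rewrite -(mulr0 (- p^-1)); apply: cvgMr; exact: powR_cvgy0.
- by move=> x ax; have [] := dF x ax.
- apply: cvg_at_right_filter; apply: differentiable_continuous.
  by apply/derivable1_diffP; have [] := @dF_tail p a p0 a0.
- move=> x; rewrite in_itv/= andbT => ax.
  by have Hd := dF x ax; rewrite derive1E derive_val.
Qed.

Lemma dF_seg (b x : R) : b != 0 -> 0 < x ->
  is_derive x 1 (fun y => b^-1 * y `^ b) (x `^ (b-1)).
Proof.
move=> b0 x0.
have H := is_deriveZ (b^-1) (is_derive1_powR b x0).
have -> : x `^ (b-1) = b^-1 *: (b * x `^ (b - 1)).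
  by rewrite scalerA mulVf// scale1r.
exact: H.
Qed.

Lemma int_seg (x y b : R) : 0 < x -> x < y -> b != 0 ->
  (\int[mu]_(s in `[x, y]) (s `^ (b-1))%:E = ((y `^ b - x `^ b) / b)%:E)%E.
Proof.
move=> x0 xy b0.
pose F := fun y : R => b^-1 * y `^ b.
have dF (z : R) : 0 < z -> is_derive z 1 F (z `^ (b-1)) by move=> z0; exact: dF_seg.
have y0 : 0 < y by exact: lt_trans xy.
rewrite (@continuous_FTC2 _ _ F).
- by rewrite /F -EFinB -mulrBr mulrC.
- by [].
- apply: continuous_subspace_itv => z; rewrite in_itv/= => /andP[xz _].
  by apply: powR_cont; exact: lt_le_trans xz.
- split.
  + move=> z; rewrite in_itv/= => /andP[xz _].
    by have [] := dF z (lt_trans x0 xz).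
  + apply: cvg_at_right_filter; apply: differentiable_continuous.
    by apply/derivable1_diffP; have [] := dF x x0.
  + apply: cvg_at_left_filter; apply: differentiable_continuous.
    by apply/derivable1_diffP; have [] := dF y y0.
- move=> z; rewrite in_itv/= => /andP[xz _].
  by have Hd := dF z (lt_trans x0 xz); rewrite derive1E derive_val.
Qed.

Lemma fine_ub (x : \bar R) (y : R) : (0 <= x)%E -> (x <= y%:E)%E -> fine x <= y.
Proof. by case: x => //= [r _|]; rewrite ?lee_fin// leey. Qed.

Lemma fine_lb (x : \bar R) (y : R) : x \is a fin_num -> (y%:E <= x)%E -> y <= fine x.
Proof. by case: x => //= r _; rewrite lee_fin. Qed.

Definition hW (a s : R) : R :=
  if s <= 0 then 1 else Order.min (s `^ (a-1)) (s `^ (-1-1)).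

Lemma hW_meas a : measurable_fun setT (hW a).
Proof.
apply: measurable_fun_ifT.
- by apply: measurable_realfun.measurable_fun_ler => //; exact: measurable_cst.
- exact: measurable_cst.
- by apply: measurable_realfun.measurable_minr; exact: measurable_realfun.measurable_powR.
Qed.

Lemma hW_pos a s : 0 <= s -> 0 < hW a s.
Proof.
rewrite /hW; case: ifP => // /negbT; rewrite -ltNge => s0 _.
by rewrite lt_min !powR_gt0.
Qed.

Lemma hW_le1 a s : 0 < s -> hW a s <= s `^ (a-1).
Proof. by move=> s0; rewrite /hW (leNgt s 0) s0/= ge_min lexx. Qed.

Lemma hW_le2 a s : 0 < s -> hW a s <= s `^ (-1-1).
Proof. by move=> s0; rewrite /hW (leNgt s 0) s0/= ge_min lexx orbT. Qed.

Lemma hW_eq a s : 0 <= a -> 0 < s -> s <= 1 -> hW a s = s `^ (a-1).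
Proof.
move=> a0 s0 s1; rewrite /hW (leNgt s 0) s0/= min_l//.
apply: ger_powR; first by rewrite s0 s1.
by rewrite lerD2r (le_trans _ a0)// lerN10.
Qed.

Lemma mhW a (D : set R) : measurable D -> measurable_fun D (fun s => (hW a s)%:E).
Proof. by move=> mD; apply: measurableT_comp => //; apply: measurable_funTS; exact: hW_meas. Qed.

Lemma int_hW_seg a x y : 0 < a -> 0 < x -> x < y -> y <= 1 ->
  (\int[mu]_(s in `[x, y]) (hW a s)%:E = ((y `^ a - x `^ a) / a)%:E)%E.
Proof.
move=> a0 x0 xy y1; rewrite -int_seg ?gt_eqF//.
apply: eq_integral => s; rewrite inE/= in_itv/= => /andP[xs sy].
by rewrite hW_eq ?(ltW a0)// ?(lt_le_trans x0 xs)// (le_trans sy y1).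
Qed.

Lemma bigcup_F : \bigcup_n (`[(n.+2%:R)^-1, 1]%classic : set R) = `]0, 1]%classic.
Proof.
apply/seteqP; split => x /=.
- move=> [n _] /=; rewrite !in_itv/= => /andP[nx ->]; rewrite andbT.
  by apply: lt_le_trans nx; rewrite invr_gt0.
- rewrite in_itv/= => /andP[x0 x1].
  exists (Num.truncn (x^-1)) => //=; rewrite in_itv/= x1 andbT.
  rewrite invf_ple ?posrE//; apply: ltW; apply: (lt_le_trans (truncnS_gt _)).
  by rewrite ler_nat.
Qed.

Lemma hW_int01 (a : R) : 0 < a -> (\int[mu]_(s in `[0%R, 1%R]) (hW a s)%:E <= (a^-1)%:E)%E.
Proof.
move=> a0.
rewrite -integral_itv_obnd_cbnd; last exact: mhW.
rewrite -bigcup_F.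
pose F := fun n : nat => (`[(n.+2%:R)^-1, 1]%classic : set R).
have nF : nondecreasing_seq F.
  apply/nondecreasing_seqP => n; rewrite subsetEset => x; rewrite /F /= !in_itv/=.
  move=> /andP[nx ->]; rewrite andbT; apply: le_trans nx.
  by rewrite lef_pV2 ?posrE// ler_nat.
have mF n : measurable (F n) by exact: measurable_itv.
have mf n : measurable_fun (F n) (fun s => (hW a s)%:E) by exact: mhW.
have f0 n x : F n x -> (0 <= (hW a x)%:E)%E.
  rewrite /F/= in_itv/= => /andP[nx _]; rewrite lee_fin; apply/ltW/hW_pos.
  by apply: le_trans nx; rewrite invr_ge0.
have cv := ge0_nondecreasing_set_cvg_integral (mu:=mu) nF mF mf f0.
rewrite -(cvg_lim _ cv)//; apply: lime_le; first by apply/cvg_ex; eexists; exact: cv.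
apply: nearW => n /=.
have n1 : (n.+2%:R)^-1 < 1 :> R by rewrite invf_lt1// ltr1n.
rewrite (@int_hW_seg a) ?invr_gt0// lee_fin powR1 -[X in _ <= X]mul1r.
by rewrite ler_wpM2r ?invr_ge0 ?ltW// lerBlDr lerDl powR_ge0.
Qed.

Lemma hW_tail1 (a : R) :
  (\int[mu]_(s in `]1%R, +oo[) (hW a s)%:E <= 1%:E)%E.
Proof.
apply: (@le_trans _ _ (\int[mu]_(s in `[1%R, +oo[) (hW a s)%:E)%E).
  apply: ge0_subset_integral => //; first exact: mhW.
    move=> x; rewrite /= in_itv/= andbT => x1; rewrite lee_fin ltW// hW_pos//.
    exact: le_trans x1.
  by apply: subset_itvr; rewrite bnd_simp.
apply: (@le_trans _ _ (\int[mu]_(s in `[1%R, +oo[) (s `^ (-1-1))%:E)%E).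
  apply: ge0_le_integral => //.
  - move=> x; rewrite /= in_itv/= andbT => x1; rewrite lee_fin ltW// hW_pos//.
    exact: le_trans x1.
  - exact: mhW.
  - apply: measurableT_comp => //; apply: measurable_funTS.
    exact: measurable_realfun.measurable_powR.
  - move=> x; rewrite /= in_itv/= andbT => x1; rewrite lee_fin hW_le2//.
    exact: lt_le_trans x1.
by rewrite int_tail// powR1 divr1.
Qed.

Lemma integrable_hW (a : R) : 0 < a -> mu.-integrable `[0%R, +oo[ (EFin \o hW a).
Proof.
move=> a0; apply/integrableP; split; first exact: mhW.
have -> : (\int[mu]_(x in `[0%R, +oo[) `|(EFin \o hW a) x| =
    \int[mu]_(x in `[0%R, +oo[) (hW a x)%:E)%E.
  apply: eq_integral => x; rewrite inE/= in_itv/= andbT => x0.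
  by rewrite /= ger0_norm// ltW// hW_pos.
have -> : `[0%R, +oo[%classic = `[0%R, 1%R]%classic `|` `]1%R, +oo[%classic :> set R.
  apply/seteqP; split => x /=.
    rewrite in_itv/= andbT => x0.
    by case: (leP x 1) => x1; [left|right]; rewrite /= in_itv/= ?x0 ?x1.
  case=> /=; rewrite !in_itv/= ?andbT; first by case/andP.
  by move=> x1; exact: ltW (lt_trans _ x1).
rewrite ge0_integral_setU //.
- apply: lte_add_pinfty.
    by rewrite (le_lt_trans (@hW_int01 a a0))// ltry.
  by rewrite (le_lt_trans (hW_tail1 a))// ltry.
- by apply: measurableT_comp => //; apply: measurable_funTS; exact: hW_meas.
- move=> x [/=|/=]; rewrite in_itv/=; first by case/andP => x0 _; rewrite lee_fin ltW// hW_pos.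
  by rewrite andbT => x1; rewrite lee_fin ltW// hW_pos// ltW// (lt_trans _ x1).
- apply/disj_set2P; apply/seteqP; split => x //=; rewrite !in_itv/= => -[/andP[_ x1] /andP[]].
  by rewrite ltNge x1.
Qed.

Lemma I1_lb (a r x y : R) : 0 < a -> 0 < x -> x < y -> y <= 1 -> y <= r ->
  (y `^ a - x `^ a) / a <= Defs.Rint `[0, r] (hW a).
Proof.
move=> a0 x0 xy y1 yr; rewrite /Defs.Rint /Rintegral; apply: fine_lb.
  apply: integrable_fin_num => //.
  apply: (integrableS _ _ _ (@integrable_hW a a0)) => //.
  by apply: subset_itvl; rewrite bnd_simp.
rewrite -(@int_hW_seg a x y)//; apply: ge0_subset_integral => //; first exact: mhW.
  by move=> s /=; rewrite in_itv/= => /andP[s0 _]; rewrite lee_fin ltW// hW_pos.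
move=> s /=; rewrite !in_itv/= => /andP[xs sy].
by rewrite (le_trans _ (ltW (lt_le_trans x0 xs)))// (le_trans sy yr).
Qed.

Lemma mhWdiv (a r : R) : 0 < r -> measurable_fun `[r, +oo[ (fun s => (hW a s / s)%:E).
Proof.
move=> r0; apply: measurableT_comp => //.
apply: (eq_measurable_fun (fun s => hW a s * s `^ (-1))).
  move=> s; rewrite inE/= in_itv/= andbT => rs.
  by rewrite powR_inv1// (le_trans _ rs)// ltW.
apply: measurable_realfun.measurable_funM; apply: measurable_funTS.
  exact: hW_meas.
exact: measurable_realfun.measurable_powR.
Qed.

Lemma I3_ub (a r p : R) : 0 < r -> 0 < p ->
  (forall s, r <= s -> hW a s / s <= s `^ (-p-1)) ->
  Defs.Rint `[r, +oo[ (fun s => hW a s / s) <= r `^ (-p) / p.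
Proof.
move=> r0 p0 hs; rewrite /Defs.Rint /Rintegral; apply: fine_ub.
  apply: integral_ge0 => s /=; rewrite in_itv/= andbT => rs.
  have s0 : 0 < s := lt_le_trans r0 rs.
  by rewrite lee_fin divr_ge0// ltW// hW_pos// ltW.
rewrite -int_tail//; apply: ge0_le_integral => //.
- move=> s /=; rewrite in_itv/= andbT => rs.
  have s0 : 0 < s := lt_le_trans r0 rs.
  by rewrite lee_fin divr_ge0// ltW// hW_pos// ltW.
- exact: mhWdiv.
- apply: measurableT_comp => //; apply: measurable_funTS.
  exact: measurable_realfun.measurable_powR.
- by move=> s /=; rewrite in_itv/= andbT => rs; rewrite lee_fin hs.
Qed.

Lemma I4_ub (a r M : R) : 0 < r -> 0 <= M ->
  (forall s, 0 < s -> s <= r -> s * hW a s <= M) ->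
  Defs.Rint `[0, r] (fun s => s * hW a s) <= M * r.
Proof.
move=> r0 M0 hs; rewrite /Defs.Rint /Rintegral; apply: fine_ub.
  apply: integral_ge0 => s /=; rewrite in_itv/= => /andP[s0 _].
  by rewrite lee_fin mulr_ge0// ltW// hW_pos.
apply: (@le_trans _ _ (\int[mu]_(s in `[0%R, r]) (cst M%:E) s)%E).
  apply: ge0_le_integral => //.
  - move=> s /=; rewrite in_itv/= => /andP[s0 _].
    by rewrite lee_fin mulr_ge0// ltW// hW_pos.
  - apply: measurableT_comp => //; apply: measurable_realfun.measurable_funM.
      exact: measurable_id.
    by apply: measurable_funTS; exact: hW_meas.
  - move=> s /=; rewrite in_itv/= => /andP[s0 sr]; rewrite lee_fin.
    have [->|s0'] := eqVneq s 0; first by rewrite mul0r.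
    by apply: hs => //; rewrite lt_neqAle eq_sym s0' s0.
rewrite integral_cst//.
have := lebesgue_measure_itv `[0%R, r]; rewrite /= lte_fin r0 -EFinB subr0 => ->.
by rewrite -EFinM.
Qed.

Lemma powR_sub1 (s q : R) : 0 < s -> s `^ (q - 1) = s `^ q / s.
Proof.
move=> s0; rewrite powRB; last by apply/implyP => _; rewrite gt_eqF.
by rewrite powRr1// ltW.
Qed.

Lemma sh_le (a s : R) : 0 < a -> 0 < s -> s * hW a s <= s `^ a.
Proof.
move=> a0 s0; rewrite -mulr_powRB1 ?(ltW s0)//.
by rewrite ler_pM2l// hW_le1.
Qed.

Lemma powRm2 (s : R) : 0 < s -> s `^ (-1-1) = s^-1 * s^-1.
Proof.
move=> s0; have -> : -1 - 1 = - (2%:R) :> R by rewrite -opprD.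
by rewrite powR_invn ?(ltW s0)// expr2 invfM.
Qed.

Lemma sh_le1 (a s : R) : 0 < a -> 0 < s -> s * hW a s <= 1.
Proof.
move=> a0 s0; case: (leP s 1) => s1.
  apply: le_trans (@sh_le a s a0 s0) _.
  apply: (@le_trans _ _ (1 `^ a)); last by rewrite powR1.
  by rewrite ge0_ler_powR ?nnegrE ?(ltW a0) ?(ltW s0).
apply: (le_trans (ler_wpM2l (ltW s0) (hW_le2 a s s0))).
by rewrite powRm2// mulrA mulfV ?gt_eqF// mul1r invf_le1// ltW.
Qed.

Lemma hdiv_le1 (a s : R) : 0 < s -> hW a s / s <= s `^ (a - 1 - 1).
Proof.
move=> s0; rewrite powR_sub1// ler_pM2r ?invr_gt0//; exact: hW_le1.
Qed.

Lemma hdiv_le2 (a s : R) : 0 < s -> hW a s / s <= s `^ (- 2 - 1).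
Proof.
move=> s0; rewrite powR_sub1// ler_pM2r ?invr_gt0//.
have -> : -2 = -1 - 1 :> R by rewrite -opprD.
exact: hW_le2.
Qed.
End S.

Theorem lemma3p5 (R : realType) (c C : R) (hc : 0 < c) (hC : 0 < C) :
  exists W2 : R -> R,
    (forall x : R, 0 <= x -> 0 < W2 x) /\
    (@lebesgue_measure R).-integrable `[0, +oo[ (EFin \o W2) /\
    (forall r : R, 0 < r -> 0 < Lstar c C W2 r).
Proof.
pose a : R := Order.min (2^-1) (c / (16 * C)).
have a0 : 0 < a by rewrite lt_min invr_gt0 ltr0n divr_gt0// mulr_gt0.
have a2 : a <= 2^-1 by rewrite ge_min lexx.
have a3 : a * (16 * C) <= c.
  by rewrite -ler_pdivlMr ?mulr_gt0// ge_min lexx orbT.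
pose B := c / (2 * a).
have hB : 8 * C <= B.
  rewrite /B ler_pdivlMr ?mulr_gt0//; lra.
exists (hW a); split; first by move=> x x0; exact: hW_pos.
split; first exact: integrable_hW.
move=> r r0; rewrite /Lstar.
pose d := (2^-1 : R) `^ (a^-1).
have da : d `^ a = 2^-1.
  by rewrite /d -powRrM mulVf ?gt_eqF// powRr1// invr_ge0 ler0n.
have d0 : 0 < d by rewrite powR_gt0// invr_gt0 ltr0n.
have d1 : d < 1.
  rewrite ltNge; apply/negP => d1.
  have : 1 `^ a <= d `^ a by rewrite ge0_ler_powR ?nnegrE ?ler01 ?(ltW a0) ?(ltW d0).
  by rewrite powR1 da invf_ge1 ?ltr0n//; lra.
set I1 := Defs.Rint _ _.
set I3 := Defs.Rint _ _.
set I4 := Defs.Rint _ _.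
have cr0 : 0 <= c / r by rewrite divr_ge0// ltW.
case: (leP r 1) => r1.
- pose X := r `^ (a-1).
  have X0 : 0 < X by rewrite powR_gt0.
  have rX : r `^ a = r * X by rewrite /X mulr_powRB1// ltW.
  have h1 : r * X / (2 * a) <= I1.
    have drr : d * r < r by rewrite gtr_pMl.
    have := @I1_lb _ a r (d * r) r a0 (mulr_gt0 d0 r0) drr r1 (lexx r).
    rewrite powRM ?(ltW d0) ?(ltW r0)// da rX.
    apply: le_trans; rewrite le_eqVlt; apply/orP; left; apply/eqP.
    by field; rewrite gt_eqF.
  have h2 : hW a r <= X by exact: hW_le1.
  have h3 : I3 <= 2 * X.
    have a1 : 0 < 1 - a by lra.
    have := @I3_ub _ a r (1 - a) r0 a1.
    have -> : - (1 - a) - 1 = a - 1 - 1 by ring.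
    have -> : - (1 - a) = a - 1 by ring.
    move=> /(_ (fun s rs => hdiv_le1 a s (lt_le_trans r0 rs))) H.
    apply: (le_trans H); rewrite -/X ler_pdivrMr; last by lra.
    nra.
  have h4 : r ^- 2 * I4 <= X.
    have := @I4_ub _ a r (r `^ a) r0 (powR_ge0 _ _).
    have H s : 0 < s -> s <= r -> s * hW a s <= r `^ a.
      move=> s0 sr; apply: le_trans (@sh_le _ a s a0 s0) _.
      by rewrite ge0_ler_powR ?nnegrE ?(ltW a0) ?(ltW s0) ?(ltW r0).
    move=> /(_ H) H4.
    have r2 : 0 < r ^- 2 by rewrite invr_gt0 exprn_gt0.
    apply: le_trans (ler_wpM2l (ltW r2) H4) _.
    rewrite rX le_eqVlt; apply/orP; left; apply/eqP.
    by field; rewrite gt_eqF.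
  have h1' : B * X <= c / r * I1.
    apply: le_trans (ler_wpM2l cr0 h1); rewrite le_eqVlt; apply/orP; left.
    by apply/eqP; rewrite /B; field; rewrite !gt_eqF.
  nra.
- pose Y := r^-1.
  have Y0 : 0 < Y by rewrite invr_gt0.
  have Y1 : Y < 1 by rewrite invf_lt1.
  have h1 : (2 * a)^-1 <= I1.
    have := @I1_lb _ a r d 1 a0 d0 d1 (lexx 1) (ltW r1).
    rewrite powR1 da; apply: le_trans; rewrite le_eqVlt; apply/orP; left; apply/eqP.
    by field; rewrite gt_eqF.
  have h2 : hW a r <= Y.
    apply: le_trans (hW_le2 a r r0) _; rewrite powRm2// -/Y.
    nra.
  have h3 : I3 <= Y.
    have := @I3_ub _ a r 2 r0 (ltr0Sn _ 1) (fun s rs => hdiv_le2 a s (lt_le_trans r0 rs)).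
    have -> : -2 = -1 - 1 :> R by rewrite -opprD.
    rewrite powRm2// -/Y => H; apply: le_trans H _.
    nra.
  have h4 : r ^- 2 * I4 <= Y.
    have := @I4_ub _ a r 1 r0 ler01 (fun s s0 _ => sh_le1 a s a0 s0).
    move=> H4.
    have r2 : 0 < r ^- 2 by rewrite invr_gt0 exprn_gt0.
    apply: le_trans (ler_wpM2l (ltW r2) H4) _.
    rewrite le_eqVlt; apply/orP; left; apply/eqP.
    by rewrite /Y; field; rewrite gt_eqF.
  have h1' : B * Y <= c / r * I1.
    apply: le_trans (ler_wpM2l cr0 h1); rewrite le_eqVlt; apply/orP; left.
    by apply/eqP; rewrite /B /Y; field; rewrite !gt_eqF.
  nra.
Qed.
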